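(* Let $\alpha=a_1a_2\cdots a_n\neq 0^n$ be a bracelet over $\{0,\dots,k-1\}$, and let $i$ be the index of the first nonzero symbol of $\alpha$. If $a_i>1$, then $\mathrm{FirstNonMin}(\alpha)=0^{i-1}(a_i-1)a_{i+1}\cdots a_n$ is a bracelet; moreover, if in addition $\alpha\in\mathbf{A}_k(n)$, then $\mathrm{FirstNonMin}(\alpha)\in\mathbf{A}_k(n)$.
   Context: Let $\Sigma=\{0,1,\dots,k-1\}$, $k\ge 2$. Strings are compared lexicographically ($\alpha<\beta$ if $\alpha$ is a proper prefix of $\beta$, or $\alpha$ has the smaller symbol at the first index where they differ). For $\alpha=a_1\cdots a_n$, $\alpha^R=a_n\cdots a_1$. $[\alpha]$ denotes the set of all rotations of $\alpha$. $\alpha$ is a necklace if it is the lexicographically smallest element of $[\alpha]$; $\alpha$ is a bracelet if it is the lexicographically smallest element of $[\alpha]\cup[\alpha^R]$. A necklace $\alpha$ is symmetric if $\alpha^R\in[\alpha]$ and asymmetric otherwise. $\mathbf{A}_k(n)$ is the set of asymmetric bracelets of length $n$ over $\Sigma$. *)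

(* Defs.v *)
From mathcomp Require Import all_boot.
Set Implicit Arguments. Unset Strict Implicit. Unset Printing Implicit Defensive.

(* Strings over Sigma = {0,...,k-1} are represented as sequences of naturals
   whose entries are all < k. Positions are 0-based in Rocq. *)

Fixpoint lexle (a b : seq nat) : bool :=
  match a, b with
  | [::], _ => true
  | _ :: _, [::] => false
  | x :: a', y :: b' => (x < y) || ((x == y) && lexle a' b')
  end.

Definition is_string (k : nat) (a : seq nat) : bool := all (fun x => x < k) a.

Definition rotations (a : seq nat) : seq (seq nat) :=
  [seq rot j a | j <- iota 0 (size a)].

Definition necklace (a : seq nat) : bool :=
  all (fun b => lexle a b) (rotations a).

Definition bracelet (a : seq nat) : bool :=
  all (fun b => lexle a b) (rotations a ++ rotations (rev a)).

Definition symmetric_necklace (a : seq nat) : bool :=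
  necklace a && (rev a \in rotations a).

(* membership in A_k(n): asymmetric bracelets of length n over {0..k-1} *)
Definition asym_bracelet (k n : nat) (a : seq nat) : bool :=
  [&& size a == n, is_string k a, bracelet a & rev a \notin rotations a].

(* 0-based index of the first nonzero symbol *)
Definition first_nonzero (a : seq nat) : nat := find (fun x => x != 0) a.

Definition FirstNonMin (a : seq nat) : seq nat :=
  let i := first_nonzero a in
  nseq i 0 ++ (nth 0 a i).-1 :: drop i.+1 a.

(* Main.v *)
Require Import Defs.
From mathcomp Require Import all_boot.
From mathcomp Require Import zify.

Lemma rot_split (m : nat) (u w : seq nat) :
  exists u' w', forall x, rot m (u ++ x :: w) = u' ++ x :: w'.
Proof.
case: (ltngtP m (size u)) => H.
- exists (drop m u), (w ++ take m u) => x.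
  by rewrite /rot drop_cat take_cat H -catA.
- have [d Hd] : exists d, m - size u = d.+1 by exists (m - size u).-1; lia.
  exists (drop d w ++ u), (take d w) => x.
  rewrite /rot drop_cat take_cat ltnNge (ltnW H) /= Hd /= -catA /=. by [].
- subst m; exists [::], (w ++ u) => x.
  by rewrite /rot drop_cat take_cat ltnn subnn drop0 take0 cats0.
Qed.

Lemma rev_split (u w : seq nat) x : rev (u ++ x :: w) = rev w ++ x :: rev u.
Proof. by rewrite rev_cat rev_cons cat_rcons. Qed.

Lemma mem_rotations (s : seq nat) j : 0 < size s -> rot j s \in rotations s.
Proof.
move=> Hs; case: (ltnP j (size s)) => H.
  by apply/mapP; exists j => //; rewrite mem_iota.
rewrite rot_oversize //; apply/mapP; exists 0; first by rewrite mem_iota.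
by rewrite rot0.
Qed.

Lemma key i c t u w : 1 < c ->
  lexle (nseq i 0 ++ c :: t) (u ++ c :: w) ->
  lexle (nseq i 0 ++ c.-1 :: t) (u ++ c.-1 :: w).
Proof.
move=> Hc; elim: i u => [|i IH] [|y u] /=.
- by rewrite !ltnn !eqxx.
- case/orP => [H|/andP [/eqP H _]]; first by rewrite (_ : c.-1 < y) //; lia.
  by subst y; rewrite (_ : c.-1 < c) //; lia.
- move=> _; apply/orP; left; lia.
- case/orP => [H|/andP [/eqP H Hl]]; first by rewrite H.
  subst y; exact: IH.
Qed.

Lemma notlex i c t z : 0 < c ->
  ~~ lexle (nseq i 0 ++ c :: t) (nseq i 0 ++ c.-1 :: z).
Proof.
move=> Hc; elim: i => [|i IH] /=.
  apply/negP => /orP [H|/andP [/eqP H _]]; lia.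
by [].
Qed.

Lemma decomp (u1 u2 : seq nat) x y w1 w2 : u1 ++ x :: w1 = u2 ++ y :: w2 ->
  (u1 = u2 /\ x = y /\ w1 = w2) \/
  (exists v, u2 = u1 ++ x :: v /\ w1 = v ++ y :: w2) \/
  (exists v, u1 = u2 ++ y :: v /\ w2 = v ++ x :: w1).
Proof.
elim: u1 u2 => [|a u1 IH] [|b u2] /=.
- by case=> -> ->; left.
- case=> -> ->; right; left; by exists u2.
- case=> -> <-; right; right; by exists u1.
- case=> -> /IH [[-> [-> ->]]|[[v [-> ->]]|[v [-> ->]]]].
  + by left.
  + right; left; by exists v.
  + right; right; by exists v.
Qed.

Lemma bracelet_step i c t : 1 < c ->
  bracelet (nseq i 0 ++ c :: t) -> bracelet (nseq i 0 ++ c.-1 :: t).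
Proof.
move=> Hc /allP Hb; apply/allP => be; rewrite mem_cat => /orP [] /mapP [m _ ->].
- have [u' [w' E]] := rot_split m (nseq i 0) t.
  rewrite E; apply: key => //; rewrite -E; apply: Hb.
  by rewrite mem_cat mem_rotations // size_cat /= addnS.
- rewrite !rev_split.
  have [u' [w' E]] := rot_split m (rev t) (rev (nseq i 0)).
  rewrite E; apply: key => //; rewrite -E; apply: Hb.
  by rewrite mem_cat rev_split mem_rotations ?orbT // size_cat /= addnS.
Qed.

Lemma has_split (s : seq nat) : has (fun x => x != 0) s ->
  s = nseq (find (fun x => x != 0) s) 0 ++
      nth 0 s (find (fun x => x != 0) s) :: drop (find (fun x => x != 0) s).+1 s.
Proof.
elim: s => [|x s IH] //=.
case: (x =P 0) => [->|/eqP Hx] /=; last by rewrite drop0.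
by move=> /IH {1}->.
Qed.

Lemma nhas (s : seq nat) : ~~ has (fun x => x != 0) s -> s = nseq (size s) 0.
Proof.
elim: s => [|x s IH] //=; rewrite negb_or negbK => /andP [/eqP -> /IH {1}->].
by [].
Qed.

Theorem mainTheorem3 (k n : nat) (a : seq nat) :
  2 <= k -> size a = n -> is_string k a -> a != nseq n 0 -> bracelet a ->
  1 < nth 0 a (first_nonzero a) ->
  bracelet (FirstNonMin a) /\
  (asym_bracelet k n a -> asym_bracelet k n (FirstNonMin a)).
Proof.
move=> Hk Hn Hs Hnz Hb Hc.
have Hh : has (fun x => x != 0) a.
  apply/negPn/negP => /nhas E; move/eqP: Hnz; apply; by rewrite {1}E Hn.
have Ea := @has_split a Hh.
rewrite /FirstNonMin.
move: Hc; rewrite /first_nonzero.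
move: Ea.
set i := find _ a; set c := nth 0 a i; set t := drop i.+1 a.
move=> Ea Hc; rewrite Ea in Hn Hs Hb; clear Hnz.
split; first exact: bracelet_step.
case/and4P => _ _ _; rewrite Ea => Hasym.
apply/and4P; split.
- by rewrite -Hn !size_cat /=.
- move: Hs; rewrite /is_string !all_cat /= => /and3P [-> H ->].
  rewrite andbT /=; lia.
- exact: bracelet_step.
- apply/negP => /mapP [m Hm].
  rewrite rev_split rev_nseq.
  have [u' [w' E]] := rot_split m (nseq i 0) t.
  rewrite E => /decomp [[Hu [_ Hw]]|[[v [Hu Hw]]|[v [Hu Hw]]]].
  + move/negP: Hasym; apply; apply/mapP; exists m.
      by move: Hm; rewrite !mem_iota !size_cat.
    by rewrite E rev_split rev_nseq Hu Hw.
  + have : c.-1 \in nseq i 0 by rewrite Hw mem_cat mem_head orbT.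
    rewrite mem_nseq => /andP [_ /eqP]; lia.
  + have Hr : rev (rot m (nseq i 0 ++ c :: t)) \in rotations (rev (nseq i 0 ++ c :: t)).
      rewrite rev_rot /rotr; apply: mem_rotations; by rewrite size_rev size_cat /= addnS.
    have := allP Hb _ (etrans (mem_cat _ _ _) (introT orP (or_intror Hr))).
    rewrite E Hw rev_split rev_split rev_nseq -catA /=.
    by move/negP: (@notlex i c t (rev v ++ c :: rev u') (ltnW Hc)).
Qed.
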